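(* Let $q \geq 1$ and let $k$ be a positive integer with $k < n$. Let $\boldsymbol{B}$ be a dictionary as described in the context, and assume that every signal $\boldsymbol{y}\in\mathbb{R}^D$ that admits a $k$-block-sparse representation admits a unique one. If $$\zeta_k + \zeta_{k-1} < \frac{1-\epsilon'_q}{1+\epsilon'_q},$$ then for every $\Lambda_k\subseteq\{1,\dots,n\}$ with $|\Lambda_k|=k$ and every $\boldsymbol{y}\in\bigoplus_{i\in\Lambda_k}\mathcal{S}_i$, every optimal solution $\boldsymbol{c}^*$ of $P'_{\ell_q/\ell_1}(\boldsymbol{y})$ satisfies $\boldsymbol{B}[i]\boldsymbol{c}^*[i]=\boldsymbol{0}$ for all $i\notin\Lambda_k$; i.e. the solution of $P'_{\ell_q/\ell_1}$ is equivalent to that of $P'_{\ell_q/\ell_0}$.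
   Context: $\boldsymbol{B} = [\boldsymbol{B}[1]\ \cdots\ \boldsymbol{B}[n]] \in \mathbb{R}^{D\times N}$ has unit-Euclidean-norm columns, blocks $\boldsymbol{B}[i] \in \mathbb{R}^{D\times m_i}$ (possibly with linearly dependent columns); $\mathcal{S}_i = \operatorname{span}(\boldsymbol{B}[i])$, and $\mathcal{S}_i\cap\mathcal{S}_j = \{0\}$ for $i\ne j$. Vectors $\boldsymbol{c}\in\mathbb{R}^N$ are written $(\boldsymbol{c}[1];\dots;\boldsymbol{c}[n])$, $\boldsymbol{c}[i]\in\mathbb{R}^{m_i}$. A $k$-block-sparse representation of $\boldsymbol{y}$ is $\boldsymbol{y}=\sum_{i\in\Lambda}\boldsymbol{s}_i$ with $|\Lambda|\le k$, $\boldsymbol{s}_i\in\mathcal{S}_i\setminus\{0\}$; uniqueness means any two have the same $\Lambda$ and the same $\boldsymbol{s}_i$. $P'_{\ell_q/\ell_1}(\boldsymbol{y})$: $\min\sum_i\|\boldsymbol{B}[i]\boldsymbol{c}[i]\|_q$ s.t. $\boldsymbol{y}=\boldsymbol{B}\boldsymbol{c}$; $P'_{\ell_q/\ell_0}(\boldsymbol{y})$: minimize $\#\{i:\boldsymbol{B}[i]\boldsymbol{c}[i]\ne 0\}$ s.t. $\boldsymbol{y}=\boldsymbol{B}\boldsymbol{c}$. Subspace coherence: $\mu(\mathcal{S}_i,\mathcal{S}_j)=\max_{0\ne\boldsymbol{x}\in\mathcal{S}_i,\,0\ne\boldsymbol{z}\in\mathcal{S}_j}\frac{|\boldsymbol{x}^\top\boldsymbol{z}|}{\|\boldsymbol{x}\|_2\|\boldsymbol{z}\|_2}$.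 $\zeta_k=\max_{\Lambda_k}\max_{i\notin\Lambda_k}\sum_{j\in\Lambda_k}\mu(\mathcal{S}_i,\mathcal{S}_j)$ over all $k$-element subsets $\Lambda_k\subseteq\{1,\dots,n\}$, with $\zeta_0=0$. $\epsilon'_q$: the smallest constant such that $(1-\epsilon'_q)\|\boldsymbol{B}[i]\boldsymbol{c}[i]\|_q^2\le\|\boldsymbol{B}[i]\boldsymbol{c}[i]\|_2^2\le(1+\epsilon'_q)\|\boldsymbol{B}[i]\boldsymbol{c}[i]\|_q^2$ for all $i$ and all $\boldsymbol{c}[i]$. *)

(* Defs.v *)
From HB Require Import structures.
From mathcomp Require Import all_boot all_order all_algebra.
From mathcomp Require Import boolp classical_sets reals exp.
Set Implicit Arguments. Unset Strict Implicit. Unset Printing Implicit Defensive.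
Import Order.TTheory GRing.Theory Num.Theory.
Local Open Scope ring_scope.

Section Defs.
Variable R : realType.
Variables (D n : nat) (m : 'I_n -> nat).
Variable B : forall i : 'I_n, 'M[R]_(D, m i).

Definition unit_columns : Prop :=
  forall (i : 'I_n) (j : 'I_(m i)), \sum_(r < D) (B i r j) ^+ 2 = 1.

Definition in_S (i : 'I_n) (v : 'cV[R]_D) : Prop :=
  exists x : 'cV[R]_(m i), v = B i *m x.

Definition trivial_intersections : Prop :=
  forall i j : 'I_n, i != j -> forall v, in_S i v -> in_S j v -> v = 0.

Definition sqnorm2 (v : 'cV[R]_D) : R := \sum_(r < D) (v r 0) ^+ 2.
Definition norm2 (v : 'cV[R]_D) : R := Num.sqrt (sqnorm2 v).

Definition qnorm (q : R) (v : 'cV[R]_D) : R :=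
  powR (\sum_(r < D) powR `|v r 0| q) q^-1.

(* subspace coherence mu(S_i, S_j), a supremum (a maximum when S_i,S_j <> 0) *)
Definition coherence (i j : 'I_n) : R :=
  sup [set t : R | exists x z : 'cV[R]_D,
         [/\ in_S i x, in_S j z, x != 0, z != 0 &
             t = `|(x^T *m z) 0 0| / (norm2 x * norm2 z)]]%classic.

(* zeta_k : max over k-subsets L and i not in L of sum_{j in L} mu(S_i,S_j);
   all terms are >= 0, so the maximum is taken with default 0 (zeta_0 = 0). *)
Definition zeta (k : nat) : R :=
  \big[Num.max/0]_(L : {set 'I_n} | #|L| == k)
     \big[Num.max/0]_(i < n | i \notin L) \sum_(j in L) coherence i j.

Definition eps_ok (q eps : R) : Prop :=
  forall (i : 'I_n) (c : 'cV[R]_(m i)),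
    (1 - eps) * (qnorm q (B i *m c)) ^+ 2 <= sqnorm2 (B i *m c) /\
    sqnorm2 (B i *m c) <= (1 + eps) * (qnorm q (B i *m c)) ^+ 2.
Definition is_eps' (q eps : R) : Prop :=
  eps_ok q eps /\ forall eps2, eps_ok q eps2 -> eps <= eps2.

Definition block_sparse_rep (k : nat) (y : 'cV[R]_D) (L : {set 'I_n})
    (s : 'I_n -> 'cV[R]_D) : Prop :=
  [/\ (#|L| <= k)%N, forall i, i \in L -> in_S i (s i) /\ s i != 0
    & y = \sum_(i in L) s i].

Definition unique_block_sparse (k : nat) : Prop :=
  forall y L s L' s', block_sparse_rep k y L s -> block_sparse_rep k y L' s' ->
    L = L' /\ forall i, i \in L -> s i = s' i.

Definition in_sum_S (L : {set 'I_n}) (y : 'cV[R]_D) : Prop :=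
  exists s : 'I_n -> 'cV[R]_D, (forall i, i \in L -> in_S i (s i)) /\
    y = \sum_(i in L) s i.

Definition Bmul (c : forall i : 'I_n, 'cV[R]_(m i)) : 'cV[R]_D :=
  \sum_(i < n) B i *m c i.

Definition Pq1_opt (q : R) (y : 'cV[R]_D) (c : forall i : 'I_n, 'cV[R]_(m i)) : Prop :=
  y = Bmul c /\
  forall c' : forall i : 'I_n, 'cV[R]_(m i), y = Bmul c' ->
    \sum_(i < n) qnorm q (B i *m c i) <= \sum_(i < n) qnorm q (B i *m c' i).

End Defs.

(* Main.v *)
Require Import Defs.
Set Warnings "-notation-overridden,-ambiguous-paths,-notation-incompatible-prefix".
Set Implicit Arguments. Unset Strict Implicit.
From HB Require Import structures.
From mathcomp Require Import all_boot all_order all_algebra.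
From mathcomp Require Import boolp classical_sets reals exp.
From mathcomp Require Import ring lra.
From mathcomp Require Import ereal sequences measure lebesgue_measure lebesgue_integral hoelder.
Import Order.TTheory GRing.Theory Num.Theory.
Local Open Scope ring_scope.

Section Mink.
Variable R : realType.

Lemma lnorm_fin (p : R) (D : nat) (f : nat -> R) : 0 < p ->
  (forall k, (D <= k)%N -> f k = 0) ->
  Lnorm (@counting _ R) p%:E (EFin \o f) =
    ((\sum_(k < D) `|f k| `^ p) `^ p^-1)%:E.
Proof.
move=> p0 fD.
rewrite Lnorm_counting//.
rewrite (nneseries_split 0 D); last by move=> k; rewrite poweR_ge0.
rewrite add0n ereal_series_cond eseries0 ?adde0; last first.
  move=> i _ /andP[Di _]; rewrite /= fD //= ?abse0 ?normr0 ?poweR0r ?powR0 ?gt_eqF //.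
have E k : (`|(EFin \o f) k| `^ p)%E = (`|f k| `^ p)%:E.
  by [].
under eq_bigr do rewrite E.
rewrite sumEFin poweR_EFin big_mkord //.
Qed.

Definition ext {D : nat} (u : 'cV[R]_D) (k : nat) : R :=
  if @insub _ (fun k => (k < D)%N) 'I_D k is Some i then u i 0 else 0.

Lemma ext_val D (u : 'cV[R]_D) (i : 'I_D) : ext u i = u i 0.
Proof. by rewrite /ext valK. Qed.

Lemma ext_out D (u : 'cV[R]_D) k : (D <= k)%N -> ext u k = 0.
Proof. by move=> Dk; rewrite /ext insubF // ltnNge Dk. Qed.

Lemma qnorm_lnorm (q : R) D (u : 'cV[R]_D) : 0 < q ->
  Lnorm (@counting _ R) q%:E (EFin \o ext u) = (qnorm q u)%:E.
Proof.
move=> q0; rewrite (@lnorm_fin q D _ q0 (@ext_out D u)) /qnorm.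
by congr (_ `^ _)%:E; apply: eq_bigr => i _; rewrite ext_val.
Qed.

Lemma qnormD (q : R) D (u v : 'cV[R]_D) : 1 <= q ->
  qnorm q (u + v) <= qnorm q u + qnorm q v.
Proof.
move=> q1; have q0 : 0 < q by apply: lt_le_trans q1.
have mf (f : nat -> R) : measurable_fun (@classical_sets.setT nat) f by [].
have := minkowski_EFin (@counting _ R) (mf (ext u)) (mf (ext v)) q1.
rewrite !qnorm_lnorm // -lee_fin => H; apply: le_trans H.
rewrite -qnorm_lnorm //; rewrite le_eqVlt; apply/orP; left; apply/eqP; congr (Lnorm _ _ _).
apply/funext => k /=; case: (ltnP k D) => kD.
  by rewrite -[k]/(val (Ordinal kD)) !ext_val !mxE.
by rewrite !ext_out // addr0.
Qed.

Lemma qnorm_ge0 (q : R) D (u : 'cV[R]_D) : 0 <= qnorm q u.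
Proof. exact: powR_ge0. Qed.

Lemma qnormN (q : R) D (u : 'cV[R]_D) : qnorm q (- u) = qnorm q u.
Proof. by rewrite /qnorm; congr (_ `^ _); apply: eq_bigr => r _; rewrite mxE normrN. Qed.

Lemma qnorm0 (q : R) D : 0 < q -> qnorm q (0 : 'cV[R]_D) = 0.
Proof.
move=> q0; rewrite /qnorm big1 ?powR0 // ?invr_neq0 ?gt_eqF //.
by move=> r _; rewrite mxE normr0 powR0 // gt_eqF.
Qed.

Definition dot {D} (u v : 'cV[R]_D) : R := \sum_(r < D) u r 0 * v r 0.

Lemma sqnorm2_dot D (u : 'cV[R]_D) : sqnorm2 u = dot u u.
Proof. by apply: eq_bigr => r _; rewrite expr2. Qed.

Lemma sqnorm2_ge0 D (u : 'cV[R]_D) : 0 <= sqnorm2 u.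
Proof. by apply: sumr_ge0 => r _; rewrite sqr_ge0. Qed.

Lemma norm2_ge0 D (u : 'cV[R]_D) : 0 <= norm2 u.
Proof. exact: sqrtr_ge0. Qed.

Lemma norm2_sqr D (u : 'cV[R]_D) : norm2 u ^+ 2 = sqnorm2 u.
Proof. by rewrite sqr_sqrtr // sqnorm2_ge0. Qed.

Lemma sqnorm2_gt0 D (u : 'cV[R]_D) : u != 0 -> 0 < sqnorm2 u.
Proof.
move=> u0; rewrite lt_neqAle sqnorm2_ge0 andbT eq_sym; apply: contra u0 => /eqP.
move/psumr_eq0P => H; apply/eqP/matrixP => r j; rewrite ord1 mxE.
by apply/eqP; rewrite -sqrf_eq0; apply/eqP; apply: H => // r' _; rewrite sqr_ge0.
Qed.

Lemma norm2_gt0 D (u : 'cV[R]_D) : u != 0 -> 0 < norm2 u.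
Proof. by move=> u0; rewrite sqrtr_gt0 sqnorm2_gt0. Qed.

Lemma dot_suml D (I : finType) (f : I -> 'cV[R]_D) v :
  dot (\sum_i f i) v = \sum_i dot (f i) v.
Proof.
rewrite /dot exchange_big /=; apply: eq_bigr => r _.
by rewrite summxE mulr_suml.
Qed.

Lemma dotC D (u v : 'cV[R]_D) : dot u v = dot v u.
Proof. by apply: eq_bigr => r _; rewrite mulrC. Qed.

Lemma dot_mx D (u v : 'cV[R]_D) : (u^T *m v) 0 0 = dot u v.
Proof. by rewrite mxE; apply: eq_bigr => r _; rewrite mxE. Qed.

Lemma CS D (u v : 'cV[R]_D) : 0 < norm2 u -> 0 < norm2 v ->
  `|dot u v| <= norm2 u * norm2 v.
Proof.
move=> ua vb; set a := norm2 u; set b := norm2 v.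
have Ha : \sum_(r < D) u r 0 ^+ 2 = a ^+ 2 by rewrite norm2_sqr.
have Hb : \sum_(r < D) v r 0 ^+ 2 = b ^+ 2 by rewrite norm2_sqr.
have key (sg : R) : sg ^+ 2 = 1 -> a * b * (sg * dot u v) <= a ^+ 2 * b ^+ 2.
  move=> sg2.
  have : 0 <= \sum_(r < D) (b * u r 0 - sg * a * v r 0) ^+ 2.
    by apply: sumr_ge0 => r _; rewrite sqr_ge0.
  have -> : \sum_(r < D) (b * u r 0 - sg * a * v r 0) ^+ 2 =
     b ^+ 2 * \sum_(r < D) u r 0 ^+ 2 - 2 * (a * b * (sg * dot u v))
     + sg ^+ 2 * a ^+ 2 * \sum_(r < D) v r 0 ^+ 2.
    rewrite /dot !mulr_sumr -!sumrB -big_split /=; apply: eq_bigr => r _.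
    ring.
  rewrite Ha Hb sg2; lra.
have ab0 : 0 < a * b by rewrite mulr_gt0.
have H1 := key 1 (expr1n _ _); have H2 := key (-1) ltac:(by rewrite sqrrN expr1n).
rewrite -(ler_pM2l ab0); have -> : a * b * (a * b) = a ^+ 2 * b ^+ 2 by ring.
case: (ler0P (dot u v)) => h.
- by move: H2; rewrite mulN1r.
- by move: H1; rewrite mul1r.
Qed.

End Mink.

Section Coh.
Variable R : realType.
Variables (D n : nat) (m : 'I_n -> nat).
Variable B : forall i : 'I_n, 'M[R]_(D, m i).

Let cohset i j := [set t : R | exists x z : 'cV[R]_D,
         [/\ in_S B i x, in_S B j z, x != 0, z != 0 &
             t = `|(x^T *m z) 0 0| / (norm2 x * norm2 z)]]%classic.

Lemma cohset_bnd i j t : cohset i j t -> 0 <= t <= 1.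
Proof.
move=> [x [z [_ _ x0 z0 ->]]].
have xp := @norm2_gt0 _ _ _ x0; have zp := @norm2_gt0 _ _ _ z0.
rewrite divr_ge0 ?normr_ge0 ?mulr_ge0 ?norm2_ge0 //=.
by rewrite ler_pdivrMr ?mulr_gt0 // mul1r dot_mx CS.
Qed.

Lemma cohset_sup i j t : cohset i j t -> t <= coherence B i j.
Proof.
move=> Et; apply: (sup_upper_bound (E := cohset i j)) => //.
split; first by exists t.
by exists 1 => u /cohset_bnd /andP[].
Qed.

Lemma coh_ge0 i j : 0 <= coherence B i j.
Proof.
have [[t Et]|nE] := pselect (exists t, cohset i j t).
  by apply: (le_trans _ (cohset_sup Et)); case/andP: (cohset_bnd Et).
rewrite /coherence; change (0 <= sup (cohset i j)); have -> : cohset i j = set0.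
  by apply/funext => t; apply/propext; split => // Et; apply: nE; exists t.
by rewrite sup0.
Qed.

Lemma coh_bound i j (a : 'cV[R]_(m i)) (b : 'cV[R]_(m j)) :
  `|dot (B i *m a) (B j *m b)| <=
    coherence B i j * norm2 (B i *m a) * norm2 (B j *m b).
Proof.
set x := B i *m a; set z := B j *m b.
have [->|x0] := eqVneq x 0.
  by rewrite /dot big1 ?normr0 ?mulr_ge0 ?coh_ge0 ?norm2_ge0 // => r _; rewrite mxE mul0r.
have [->|z0] := eqVneq z 0.
  by rewrite /dot big1 ?normr0 ?mulr_ge0 ?coh_ge0 ?norm2_ge0 // => r _; rewrite mulrC mxE mul0r.
have xp := @norm2_gt0 _ _ _ x0; have zp := @norm2_gt0 _ _ _ z0.
have Et : cohset i j (`|(x^T *m z) 0 0| / (norm2 x * norm2 z)).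
  by exists x, z; split => //; [exists a | exists b].
have := cohset_sup Et; rewrite dot_mx ler_pdivrMr ?mulr_gt0 // mulrA //.
Qed.
End Coh.

Lemma sum_split (R : realType) n (L : {set 'I_n}) (F : 'I_n -> R) :
  \sum_i F i = \sum_(i in L) F i + \sum_(i | i \notin L) F i.
Proof. by rewrite (bigID (mem L)). Qed.

Lemma zeta_ge0 (R : realType) D n (m : 'I_n -> nat) (B : forall i, 'M[R]_(D, m i)) k :
  0 <= zeta B k.
Proof. by apply/bigmax_geP; left. Qed.

Lemma eq_le_dummy (R : realType) (x y : R) : x = y -> x <= y.
Proof. by move=> ->. Qed.

Lemma arith_eps (R : realType) (e Q2 S : R) : 0 < S -> 0 <= Q2 ->
  (1 - e) * Q2 <= S -> S <= (1 + e) * Q2 -> 0 <= e.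
Proof. move=> *; nra. Qed.

Lemma arith_eps1 (R : realType) (e z1 z2 : R) : 0 <= e -> 0 <= z1 -> 0 <= z2 ->
  z1 + z2 < (1 - e) / (1 + e) -> (z1 + z2) * (1 + e) < 1 - e.
Proof.
move=> e0 h1 h2 h; rewrite -ltr_pdivlMr; first exact: h.
by apply: lt_le_trans (ler_wpDr e0 (lexx 1)); apply: ltr01.
Qed.

Lemma arith_final (R : realType) (e z z' A2 C2 Aq Cq sa sb : R) :
 0 <= e -> 0 <= z -> 0 <= z' -> (z + z') * (1 + e) < 1 - e ->
 sa ^+ 2 = 1 - e -> sb ^+ 2 = 1 + e -> 0 < sa -> sa <= sb ->
 A2 <= z' * A2 + z * C2 -> sa * Aq <= A2 -> C2 <= sb * Cq -> Cq <= Aq ->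
 0 < Cq -> False.
Proof.
move=> e0 z0 z'0 hz ha hb sa0 sab h1 h2 h3 h4 h5.
have sb0 : 0 < sb by apply: (lt_le_trans sa0 sab).
have z'1 : 0 < 1 - z' by nra.
have k1 : (1 - z') * A2 <= z * (sb * Cq).
  have : z * C2 <= z * (sb * Cq) by apply: ler_wpM2l.
  lra.
have k2 : (1 - z') * (sa * Aq) <= (1 - z') * A2.
  by apply: ler_wpM2l; [apply: ltW | ].
have k2' : z * (sb * Cq) <= z * (sb * Aq).
  by apply: ler_wpM2l => //; apply: ler_wpM2l => //; apply: ltW.
have Aq0 : 0 < Aq by apply: (lt_le_trans h5 h4).
have k3 : (1 - z') * sa <= z * sb.
  rewrite -(ler_pM2r Aq0) -!mulrA.
  exact: (le_trans k2 (le_trans k1 k2')).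
have k4 : (1 - z') * sa * sa <= z * sb * sb.
  have t1 : (1 - z') * sa * sa <= z * sb * sa by apply: ler_wpM2r => //; apply: ltW.
  have t2 : z * sb * sa <= z * sb * sb.
    by apply: ler_wpM2l => //; apply: mulr_ge0 => //; apply: ltW.
  exact: le_trans t1 t2.
rewrite -!mulrA -!expr2 ha hb in k4.
nra.
Qed.

Lemma sub_le_add (R : realType) (e : R) : 0 <= e -> 1 - e <= 1 + e.
Proof. move=> *; lra. Qed.

Unset Implicit Arguments.

Theorem proposition4 (R : realType) (D n : nat) (m : 'I_n -> nat)
    (B : forall i : 'I_n, 'M[R]_(D, m i)) (q eps : R) (k : nat) :
  1 <= q -> (0 < k)%N -> (k < n)%N ->
  unit_columns B -> trivial_intersections B ->
  unique_block_sparse B k ->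
  is_eps' B q eps ->
  zeta B k + zeta B k.-1 < (1 - eps) / (1 + eps) ->
  forall (L : {set 'I_n}) (y : 'cV[R]_D), #|L| = k -> in_sum_S B L y ->
  forall c : forall i : 'I_n, 'cV[R]_(m i), Pq1_opt B q y c ->
  forall i : 'I_n, i \notin L -> B i *m c i = 0.
Proof.
move=> q1 k0 kn uc ti ub [epsok _] hz L y cardL [s [sS ys]] c [yc copt] i0 i0L.
have q0 : 0 < q by apply: lt_le_trans q1.
have [//|nz] := eqVneq (B i0 *m c i0) 0.
exfalso.
have [a Ha] : exists a : forall i, 'cV[R]_(m i),
    forall i, i \in L -> s i = B i *m a i.
  exists (fun i => match pselect (in_S B i (s i)) with
                   | left H => sval (cid H) | right _ => 0 end).
  move=> i iL; case: pselect => [H|H]; last by case: H; apply: sS.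
  exact: (svalP (cid H)).
pose c' i := if i \in L then a i else 0.
have Bc' i : B i *m c' i = if i \in L then s i else 0.
  by rewrite /c'; case: ifP => iL; [rewrite -Ha | rewrite mulmx0].
have yc' : y = Bmul B c'.
  by rewrite /Bmul ys big_mkcond /=; apply: eq_bigr => i _; rewrite Bc'.
have opt := copt c' yc'.
have optR : \sum_(i < n) qnorm q (B i *m c' i) = \sum_(i in L) qnorm q (s i).
  rewrite [RHS]big_mkcond; apply: eq_bigr => i _; rewrite Bc'.
  case: ifP => _; first reflexivity.
  by rewrite (qnorm0 _ q0).
have opt2 : \sum_(i < n) qnorm q (B i *m c i) <= \sum_(i in L) qnorm q (s i).
  exact: (le_trans opt (eq_le_dummy optR)).
pose z i := B i *m (c i - c' i).
have zE i : z i = B i *m c i - (if i \in L then s i else 0).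
  rewrite /z mulmxBr Bc'. reflexivity.
have zN i : i \notin L -> z i = B i *m c i.
  by move=> iL; rewrite zE (negbTE iL) subr0.
have sumz : \sum_i z i = 0.
  have : Bmul B c - Bmul B c' = 0 by rewrite -yc -yc' subrr.
  rewrite /Bmul -sumrB => H; apply: etrans H; apply: eq_bigr => i _; rewrite /z mulmxBr; reflexivity.
pose N i := norm2 (z i).
pose Q i := qnorm q (z i).
have N0 i : 0 <= N i by apply: norm2_ge0.
have Q0 i : 0 <= Q i by apply: qnorm_ge0.
have epsz i : (1 - eps) * Q i ^+ 2 <= N i ^+ 2 /\ N i ^+ 2 <= (1 + eps) * Q i ^+ 2.
  by rewrite /N norm2_sqr; apply: epsok.
have zi0 : z i0 != 0 by rewrite zN.
have Ni0 : 0 < N i0 by apply: norm2_gt0.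
have Qi0 : 0 < Q i0.
  rewrite lt_neqAle Q0 andbT eq_sym; apply/negP => /eqP Qz.
  have [_ h] := epsz i0; move: h; rewrite Qz expr0n /= mulr0.
  by rewrite leNgt exprn_gt0.
have eps0 : 0 <= eps.
  have [h1 h2] := epsz i0.
  exact: (arith_eps (exprn_gt0 2 Ni0) (sqr_ge0 (Q i0)) h1 h2).
have z1 := zeta_ge0 B k; have z2 := zeta_ge0 B k.-1.
have hz' := arith_eps1 eps0 z1 z2 hz.
have eps1 : eps < 1.
  have h3 : 0 <= (zeta B k + zeta B k.-1) * (1 + eps).
    by apply: mulr_ge0; [apply: addr_ge0 | apply: addr_ge0 ler01 eps0].
  move: (le_lt_trans h3 hz'); rewrite subr_gt0; exact.
set sa := Num.sqrt (1 - eps); set sb := Num.sqrt (1 + eps).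
have e1 : 0 <= 1 - eps by rewrite subr_ge0 ltW.
have e2 : 0 <= 1 + eps by apply: addr_ge0 ler01 eps0.
have lowb i : sa * Q i <= N i.
  rewrite -[Q i]ger0_norm; last exact: Q0.
  rewrite -sqrtr_sqr -(sqrtrM _ e1).
  rewrite /N /norm2 ler_sqrt; last exact: sqnorm2_ge0.
  by rewrite -norm2_sqr; case: (epsz i).
have uppb i : N i <= sb * Q i.
  rewrite -[Q i]ger0_norm; last exact: Q0.
  rewrite -sqrtr_sqr -(sqrtrM _ e2).
  rewrite /N /norm2 ler_sqrt; last by apply: mulr_ge0 e2 (sqr_ge0 _).
  by rewrite -norm2_sqr; case: (epsz i).
have cohj j : N j <= \sum_(i | i != j) coherence B i j * N i.
  have dsum : \sum_i dot (z i) (z j) = 0.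
    rewrite -dot_suml sumz /dot; apply: big1 => r _; rewrite mxE mul0r; reflexivity.
  have dj : dot (z j) (z j) = - \sum_(i | i != j) dot (z i) (z j).
    move: dsum; rewrite (bigD1 j isT) /= => /eqP; rewrite addr_eq0 => /eqP ->.
    reflexivity.
  have h : N j ^+ 2 <= (\sum_(i | i != j) coherence B i j * N i) * N j.
    rewrite /N norm2_sqr sqnorm2_dot dj mulr_suml -sumrN; apply: ler_sum => i _.
    apply: le_trans (coh_bound B (c i - c' i) (c j - c' j)).
    by rewrite ler_normr lexx orbT.
  have [Nz|Np] := eqVneq (N j) 0.
    rewrite Nz; apply: sumr_ge0 => i _; exact: mulr_ge0 (coh_ge0 B i j) (N0 i).
  have Npos : 0 < N j by rewrite lt_neqAle eq_sym Np N0.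
  by move: h; rewrite expr2 (ler_pM2r Npos).
have E1 : \sum_(j in L) \sum_(i | i != j) coherence B i j * N i =
          \sum_i (\sum_(j in L | j != i) coherence B i j) * N i.
  rewrite (exchange_big_dep xpredT) /=; last by move=> *.
  apply: eq_bigr => i _; rewrite mulr_suml; apply: eq_bigl => j.
  by rewrite eq_sym.
have bnd i : \sum_(j in L | j != i) coherence B i j <=
             (if i \in L then zeta B k.-1 else zeta B k).
  case: ifP => iL.
  - apply: (@le_trans _ _ (\sum_(j in L :\ i) coherence B i j)).
      apply/eq_le_dummy/eq_bigl => j; rewrite !inE andbC; reflexivity.
    apply/bigmax_geP; right; exists (L :\ i).
      by move: cardL; rewrite (cardsD1 i L) iL => <-.
    apply/bigmax_geP; right; exists i; first by rewrite !inE eqxx.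
    exact: lexx.
  - apply/bigmax_geP; right; exists L; first by rewrite cardL.
    apply/bigmax_geP; right; exists i; first by rewrite iL.
    apply/eq_le_dummy/eq_bigl => j.
    case jL: (j \in L) => //=; apply/negP => /eqP ji; by rewrite -ji jL in iL.
pose A2 := \sum_(i in L) N i.
pose C2 := \sum_(i | i \notin L) N i.
pose Aq := \sum_(i in L) Q i.
pose Cq := \sum_(i | i \notin L) Q i.
have S2 : A2 <= zeta B k.-1 * A2 + zeta B k * C2.
  apply: (le_trans (ler_sum _ (fun j _ => cohj j))).
  apply: le_trans (eq_le_dummy E1) _.
  apply: (@le_trans _ _ (\sum_i (if i \in L then zeta B k.-1 else zeta B k) * N i)).
    by apply: ler_sum => i _; apply: ler_wpM2r; [exact: N0 | exact: bnd].
  rewrite (sum_split L) /A2 /C2 !mulr_sumr; apply/eq_le_dummy; congr (_ + _).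
    by apply: eq_bigr => i ->.
  by apply: eq_bigr => i /negbTE ->.
have T1 i : i \in L -> qnorm q (s i) <= qnorm q (B i *m c i) + Q i.
  move=> iL; have -> : s i = B i *m c i + - z i.
    by rewrite zE iL /= opprB addrC subrK.
  apply: le_trans (qnormD (B i *m c i) (- z i) q1) _; rewrite qnormN; exact: lexx.
have T2 : \sum_(i in L) qnorm q (s i) <= \sum_(i in L) qnorm q (B i *m c i) + Aq.
  rewrite /Aq -big_split /=; apply: ler_sum => i iL; exact: T1.
have T3' : \sum_(i | i \notin L) qnorm q (B i *m c i) = Cq.
  by apply: eq_bigr => i iL; rewrite /Q (zN i iL).
have T3 : \sum_(i < n) qnorm q (B i *m c i) = \sum_(i in L) qnorm q (B i *m c i) + Cq.
  by rewrite (sum_split L) T3'.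
have CA : Cq <= Aq.
  have H := le_trans opt2 T2.
  rewrite T3 in H.
  move: H; rewrite lerD2l; exact.
have Cq0 : 0 < Cq.
  rewrite /Cq (bigD1 i0 i0L) /=; apply: (lt_le_trans Qi0).
  rewrite lerDl; apply: sumr_ge0 => i _; exact: Q0.
have La : sa * Aq <= A2.
  rewrite /Aq mulr_sumr; apply: ler_sum => i _; exact: lowb.
have Lc : C2 <= sb * Cq.
  rewrite /Cq mulr_sumr; apply: ler_sum => i _; exact: uppb.
apply: (arith_final eps0 z1 z2 hz' _ _ _ _ S2 La Lc CA Cq0).
- exact: sqr_sqrtr e1.
- exact: sqr_sqrtr e2.
- rewrite sqrtr_gt0 subr_gt0; exact: eps1.
- rewrite ler_sqrt; last exact: e2.
  exact: sub_le_add eps0.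
Qed.
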